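(* Consider $n$ people and $m$ items, with a social network $a_{il}\in\{0,1\}$ ($a_{il}=1$ iff person $i$ and person $l$ are connected), yesterday's purchases $x_{lk}\in\{0,1\}$ (person $l$ bought item $k$ yesterday) and today's purchases $y_{ik}\in\mathbb{N}$ (units of item $k$ bought by person $i$ today). Let $\rho_i$ be latent per-person confounders, $\tau_k$ latent per-item confounders, and $\hat c_i$, $\hat w_k$ per-person and per-item substitute variables. Fix a person $j$, let $n_j$ be the number of peers $i$ with $a_{ij}=1$, and for each $i,k$ write $a_i^{-j}=\{a_{il}: l\neq j\}$ and $x_k^{-j}=\{x_{lk}: l\neq j\}$. Define $$\mu_{ik}(a,x)=\mathbb{E}[y_{ik}\mid a_{ij}=a,\ x_{jk}=x,\ a_i^{-j},\ x_k^{-j},\ \rho_i,\ \tau_k],$$ and let the average social influence of person $j$ be $$\psi_j=\frac{1}{n_j\, m}\sum_{i:\,a_{ij}=1}\sum_{k=1}^m \mathbb{E}_{\rho_i,\tau_k}\Big[\mathbb{E}_{a_i^{-j},x_k^{-j}}\big[\mu_{ik}(1,1)-\mu_{ik}(1,0)\big]\Big].$$ Suppose that for all $i,k$ and $a,x\in\{0,1\}$, $$\mu_{ik}(a,x)=\mathbb{E}[y_{ik}\mid a_{ij}=a,\ x_{jk}=x,\ a_i^{-j},\ x_k^{-j},\ \hat c_i,\ \hat w_k],$$ and that today's purchases are drawn from the Poisson model $y_{ik}\sim\mathrm{Pois}(\lambda_{ik})$ with $$\lambda_{ik}=\gamma_k^\top \hat c_i+\alpha_i^\top \hat w_k+\sum_{l}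 a_{il}\, x_{lk}\,\beta_l,$$ where $\gamma_k,\alpha_i$ are nonnegative vectors and $\beta_l\ge 0$ are scalars. Then $\psi_j=\beta_j$.
   Context: The formula for $\psi_j$ is the backdoor-adjusted expression of the causal quantity $\psi_j=\frac{1}{n_j}\sum_{i:a_{ij}=1}\frac1m\sum_k\big(\mathbb{E}[y_{ik}\mid a_{ij}=1; \mathrm{do}(x_{jk}=1)]-\mathbb{E}[y_{ik}\mid a_{ij}=1;\mathrm{do}(x_{jk}=0)]\big)$ under a causal model in which connections are caused by per-person traits, yesterday's purchases by per-person preferences and per-item attributes $\tau_k$, and today's purchase $y_{ik}$ by these same variables together with $a_i$ and $x_k$; the substitutes $\hat c_i=\mathbb{E}[c_i\mid \mathbf a]$ and $\hat w_k=\mathbb{E}[w_k\mid\mathbf x]$ are posterior means of latent factors in Poisson factor models of the network and of yesterday's purchases. The result is an infinite-data (population-level) statement. *)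

(* Defs.v *)
From HB Require Import structures.
From mathcomp Require Import all_boot all_order all_algebra.
From mathcomp Require Import all_classical all_reals all_analysis.
Set Implicit Arguments. Unset Strict Implicit. Unset Printing Implicit Defensive.
Import Order.TTheory GRing.Theory Num.Theory.
Local Open Scope ring_scope.

(* [upd f j b]: the vector f with its j-th coordinate replaced by b.
   Used to write (a_{ij} = a, a_i^{-j}) and (x_{jk} = x, x_k^{-j}). *)
Definition upd (n : nat) (f : 'I_n -> bool) (j : 'I_n) (b : bool) : 'I_n -> bool :=
  fun l => if l == j then b else f l.

Definition dotp (R : realType) (d : nat) (u v : 'I_d -> R) : R :=
  \sum_(q < d) u q * v q.

(* Mean (expectation) of the Poisson distribution Pois(r) on nat
   (library measure [poisson_prob]; its second argument is unused). *)
Definition poisson_mean (R : realType) (r : R) : \bar R :=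
  (\int[poisson_prob r 0%N]_t (t%:R : R)%:E)%E.

Definition pois_rate (R : realType) (n m d : nat)
  (gamma : 'I_m -> 'I_d -> R) (alpha : 'I_n -> 'I_d -> R) (beta : 'I_n -> R)
  (i : 'I_n) (k : 'I_m) (ai xk : 'I_n -> bool) (c w : 'I_d -> R) : R :=
  dotp (gamma k) c + dotp (alpha i) w + \sum_(l < n) (ai l && xk l)%:R * beta l.

(* mu_{ik}(a,x) as a random variable: the regression function
   M i k (= E[y_ik | a_i, x_k, rho_i, tau_k] as a function of the conditioning
   values) evaluated at a_{ij} = a, x_{jk} = x and the realized
   a_i^{-j}, x_k^{-j}, rho_i, tau_k. *)
Definition mu_ik (R : realType) (n m : nat) (Omega Trho Ttau : Type)
  (j : 'I_n)
  (M : 'I_n -> 'I_m -> ('I_n -> bool) -> ('I_n -> bool) -> Trho -> Ttau -> R)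
  (A : Omega -> 'I_n -> 'I_n -> bool) (X : Omega -> 'I_n -> 'I_m -> bool)
  (rho : 'I_n -> Omega -> Trho) (tau : 'I_m -> Omega -> Ttau)
  (i : 'I_n) (k : 'I_m) (a x : bool) (om : Omega) : R :=
  M i k (upd (A om i) j a) (upd (fun l => X om l k) j x) (rho i om) (tau k om).

(* Average social influence psi_j:
   1/(n_j m) sum_{i : a_ij = 1} sum_k E[ mu_ik(1,1) - mu_ik(1,0) ],
   the expectation being over the joint law (under P) of
   (rho_i, tau_k, a_i^{-j}, x_k^{-j}) (iterated expectation = joint). *)
Definition psi (R : realType) (n m : nat) (dsp : measure_display)
  (Omega : measurableType dsp) (P : probability Omega R) (Trho Ttau : Type)
  (a : 'I_n -> 'I_n -> bool) (j : 'I_n)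
  (M : 'I_n -> 'I_m -> ('I_n -> bool) -> ('I_n -> bool) -> Trho -> Ttau -> R)
  (A : Omega -> 'I_n -> 'I_n -> bool) (X : Omega -> 'I_n -> 'I_m -> bool)
  (rho : 'I_n -> Omega -> Trho) (tau : 'I_m -> Omega -> Ttau) : R :=
  ((#|[set i | a i j]| * m)%:R)^-1 *
  \sum_(i < n | a i j) \sum_(k < m)
     Rintegral P setT (fun om => mu_ik j M A X rho tau i k true true om
                                - mu_ik j M A X rho tau i k true false om).

(* Main.v *)
Require Import Defs.
From HB Require Import structures.
From mathcomp Require Import all_boot all_order all_algebra.
From mathcomp Require Import all_classical all_reals all_analysis.
From mathcomp Require Import ring lra.
Import Order.TTheory GRing.Theory Num.Theory.
Local Open Scope ring_scope.

Lemma pmf_id (R : realType) (r : R) k : (r * r ^+ k * (k.+1%:R^-1 / k`!%:R) * expR (- r) * k.+1%:R)%R =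
  (r * (r ^+ k / k`!%:R * expR (- r)))%R.
Proof.
have h1 : (k.+1%:R != 0 :> R)%R by rewrite pnatr_eq0.
have h2 : (k`!%:R != 0 :> R)%R by rewrite pnatr_eq0 -lt0n fact_gt0.
field; by rewrite h2 addrC natr1.
Qed.

Section pm.
Local Open Scope classical_set_scope.
Context (R : realType) (r : R).
Local Open Scope ereal_scope.

Let mu := mseries (fun n => mscale (NngNum (poisson_pmf_ge0 r n)) (\d_n)) O.

Lemma pois_eq : (0 < r)%R -> poisson_prob r 0%N = mu.
Proof.
move=> r0; apply/funext => U; rewrite /poisson_prob r0 /mu /mseries /=.
rewrite (_ : U = [set x | x \in U]); last by apply/seteqP; split => x; rewrite /= inE.
rewrite -nneseries_esum; last by move=> n _; rewrite lee_fin poisson_pmf_ge0.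
rewrite eseries_mkcond; apply: eq_eseriesr => k _.
rewrite /mscale /= diracE; case: ifPn => h.
  by rewrite mem_set // mule1.
rewrite memNset; [by rewrite /= mule0 | by apply/negP].
Qed.

Lemma pois_sum1 : (0 < r)%R -> \sum_(k <oo) (poisson_pmf r k)%:E = 1.
Proof.
move=> r0; have := @probability_setT _ _ _ (poisson_prob r 0%N).
rewrite /= /poisson_prob r0 => <-.
by rewrite nneseries_esumT // => n; rewrite lee_fin poisson_pmf_ge0.
Qed.

Lemma pois_mean_pos : (0 < r)%R ->
  \int[poisson_prob r 0%N]_t ((t%:R : R)%R%:E) = r%:E.
Proof.
move=> r0; rewrite pois_eq //.
rewrite ge0_integral_measure_series //=.
under eq_eseriesr => k _.
  rewrite ge0_integral_mscale //=.
  rewrite integral_dirac //= diracT mul1e -EFinM.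
  over.
rewrite /= (nneseries_split 0 1); last by move=> k _; rewrite lee_fin mulr_ge0 // poisson_pmf_ge0.
rewrite big_nat1 mulr0 add0e /= -nneseries_addn; last by move=> k; rewrite lee_fin mulr_ge0 // poisson_pmf_ge0.
under eq_eseriesr => k _.
  rewrite (_ : poisson_pmf r (k + 1) * (k + 1)%:R = r * poisson_pmf r k)%R; last first.
    rewrite /poisson_pmf r0 addn1 factS exprS natrM invfM.
    exact: pmf_id.
  rewrite EFinM.
  over.
by rewrite nneseriesZl /=; [rewrite pois_sum1 // mule1 | move=> k _; rewrite lee_fin poisson_pmf_ge0].
Qed.

Lemma pois_mean0 : r = 0%R -> \int[poisson_prob r 0%N]_t ((t%:R : R)%R%:E) = r%:E.
Proof.
move=> ->; rewrite (_ : poisson_prob 0%R 0%N = \d_0%N); last first.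
  by apply/funext => U; rewrite /poisson_prob ltxx.
by rewrite integral_dirac //= diracT mul1e.
Qed.
End pm.

Lemma poisson_mean_eq (R : realType) (r : R) : (0 <= r)%R -> poisson_mean r = r%:E.
Proof.
rewrite le_eqVlt => /orP[/eqP r0|r0]; rewrite /poisson_mean.
  exact: pois_mean0.
exact: pois_mean_pos.
Qed.

Theorem proposition3p1
  (R : realType) (n m d : nat) (dsp : measure_display)
  (Omega : measurableType dsp) (P : probability Omega R)
  (Trho Ttau : Type)
  (* observed network, used for the peer set {i : a_ij = 1} and n_j *)
  (a : 'I_n -> 'I_n -> bool) (j : 'I_n)
  (* random network, yesterday's purchases, latent confounders, substitutes *)
  (A : Omega -> 'I_n -> 'I_n -> bool) (X : Omega -> 'I_n -> 'I_m -> bool)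
  (rho : 'I_n -> Omega -> Trho) (tau : 'I_m -> Omega -> Ttau)
  (chat : 'I_n -> Omega -> 'I_d -> R) (what : 'I_m -> Omega -> 'I_d -> R)
  (* regression functions E[y_ik | a_i, x_k, rho_i, tau_k] and
     E[y_ik | a_i, x_k, chat_i, what_k] *)
  (M : 'I_n -> 'I_m -> ('I_n -> bool) -> ('I_n -> bool) -> Trho -> Ttau -> R)
  (N : 'I_n -> 'I_m -> ('I_n -> bool) -> ('I_n -> bool) ->
         ('I_d -> R) -> ('I_d -> R) -> R)
  (gamma : 'I_m -> 'I_d -> R) (alpha : 'I_n -> 'I_d -> R) (beta : 'I_n -> R) :
  (0 < #|[set i | a i j]|)%N -> (0 < m)%N ->
  (forall k q, 0 <= gamma k q) -> (forall i q, 0 <= alpha i q) ->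
  (forall l, 0 <= beta l) ->
  (* substitutes are posterior means of nonnegative latent factors *)
  (forall i om q, 0 <= chat i om q) -> (forall k om q, 0 <= what k om q) ->
  (* substitute hypothesis: mu_ik(a,x) = E[y_ik | a_ij=a, x_jk=x, a_i^-j, x_k^-j, chat_i, what_k] *)
  (forall i k (av xv : bool) om,
      mu_ik j M A X rho tau i k av xv om =
      N i k (upd (A om i) j av) (upd (fun l => X om l k) j xv)
            (chat i om) (what k om)) ->
  (* Poisson outcome model: y_ik | a_i, x_k, chat_i, what_k ~ Pois(lambda_ik) *)
  (forall i k ai xk c w,
      ((N i k ai xk c w)%:E = poisson_mean (pois_rate gamma alpha beta i k ai xk c w))%E) ->
  psi P a j M A X rho tau = beta j.
Proof.
move=> nj0 m0 g0 a0 b0 c0 w0 hmu hN.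
have Nrate : forall i k ai xk c w, (forall q, 0 <= c q)%R -> (forall q, 0 <= w q)%R ->
    N i k ai xk c w = pois_rate gamma alpha beta i k ai xk c w.
  move=> i k ai xk c w hc hw.
  have : ((N i k ai xk c w)%:E = (pois_rate gamma alpha beta i k ai xk c w)%:E)%E.
    rewrite hN poisson_mean_eq //.
    rewrite /pois_rate /dotp; apply: addr_ge0; first apply: addr_ge0.
    - by apply: sumr_ge0 => q _; apply: mulr_ge0.
    - by apply: sumr_ge0 => q _; apply: mulr_ge0.
    - by apply: sumr_ge0 => q _; apply: mulr_ge0.
  by case.
have diff : forall i k om, (mu_ik j M A X rho tau i k true true om
    - mu_ik j M A X rho tau i k true false om = beta j)%R.
  move=> i k om; rewrite !hmu !Nrate //.
  rewrite /pois_rate.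
  set S1 := \sum_(l < n) _ * _.
  set S0 := \sum_(l < n) _ * _.
  have -> : S1 = S0 + beta j.
    rewrite /S1 /S0 (bigD1 j) //= [in RHS](bigD1 j) //= /upd eqxx /= mul1r mul0r add0r addrC.
    congr (_ + _); apply: eq_bigr => l /negbTE -> //.
  ring.
rewrite /psi.
under eq_bigr => i _.
  under eq_bigr => k _.
    rewrite (@eq_Rintegral _ _ _ P setT (fun _ => beta j)); last by move=> om _; exact: diff.
    rewrite Rintegral_cst // (_ : fine _ = 1%R) ?mulr1; last exact: (congr1 fine (probability_setT P)).
    over.
  over.
rewrite /=.
rewrite (eq_bigr (fun _ => beta j *+ m)); last by move=> i _; rewrite sumr_const card_ord.
rewrite sumr_const -mulrnA.
have ce : #|[set i | a i j]%SET| = #|a^~ j| by rewrite cardsE.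
rewrite ce.
rewrite -(mulr_natr (beta j)) mulnC mulrC -mulrA mulfV ?mulr1 //.
by rewrite pnatr_eq0 -lt0n muln_gt0 m0 /= -ce.
Qed.
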